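(* Let $G$ be a graph on $n\ge 3$ vertices, and let $k$ be the maximum number of vertices of an induced subgraph of $G$ that is a threshold graph. Then $\rho_T(G)\le n-k+1$.
   Context: Graphs are finite and simple. A graph $G=(V,E)$ is a threshold graph if there exist weights $w:V\to\mathbb{R}$ and a real number $s$ such that for all distinct $i,j\in V$: $w(i)+w(j)\ge s$ iff $ij\in E$. For $u,v\in(\mathbb{R}\cup\{\infty\})^k$ the min-plus tropical dot product is $u\odot v=\min_i(u_i+v_i)$. A min-plus $k$-tropical dot product representation of $G$ is a map $f:V\to(\mathbb{R}\cup\{\infty\})^k$ with a threshold $t>0$ such that for all distinct $x,y\in V$: $xy\in E$ iff $f(x)\odot f(y)\ge t$. $\rho_T(G)$ is the least $k\ge 1$ for which such a representation exists. *)

(* Defs.v *)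
From HB Require Import structures.
From mathcomp Require Import all_boot all_order all_algebra.
From mathcomp Require Import Rstruct.
From Stdlib Require Import Reals.
Set Implicit Arguments. Unset Strict Implicit. Unset Printing Implicit Defensive.
Import Order.TTheory GRing.Theory Num.Theory.
Local Open Scope ring_scope.

Definition simple_graph (T : finType) (e : rel T) : Prop :=
  symmetric e /\ irreflexive e.

Definition is_threshold_on (T : finType) (e : rel T) (S : {set T}) : Prop :=
  exists (w : T -> R) (s : R),
    forall i j, i \in S -> j \in S -> i != j -> ((s <= w i + w j) <-> e i j).

(* R ∪ {∞}: None encodes ∞. *)
Definition xR := option R.

Definition xadd (a b : xR) : xR :=
  match a, b with Some x, Some y => Some (x + y) | _, _ => None end.

Definition xmin (a b : xR) : xR :=
  match a, b with
  | None, _ => b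
  | _, None => a
  | Some x, Some y => Some (Num.min x y)
  end.

Definition tdot (k : nat) (u v : 'I_k -> xR) : xR :=
  \big[xmin/None]_(i < k) xadd (u i) (v i).

Definition xge (a : xR) (t : R) : bool :=
  match a with None => true | Some x => t <= x end.

Definition has_trop_rep (T : finType) (e : rel T) (k : nat) : Prop :=
  exists (f : T -> 'I_k -> xR) (t : R), 0 < t /\
    forall x y, x != y -> (e x y <-> xge (tdot (f x) (f y)) t).

(* Main.v *)
Require Import Defs.
From HB Require Import structures.
From mathcomp Require Import all_boot all_order all_algebra.
From mathcomp Require Import Rstruct.
From Stdlib Require Import Reals.
From mathcomp Require Import lra.
Import Order.TTheory GRing.Theory Num.Theory.
Local Open Scope ring_scope.

Lemma xge_xmin (a b : xR) (t : R) : xge (xmin a b) t = xge a t && xge b t.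
Proof.
case: a => [x|]; case: b => [y|] //=; last by rewrite andbT.
by rewrite le_min.
Qed.

Lemma xge_tdot (k : nat) (u v : 'I_k -> xR) (t : R) :
  xge (tdot u v) t = [forall i, xge (xadd (u i) (v i)) t].
Proof.
rewrite /tdot (big_morph (fun a => xge a t) (id1 := true) (op1 := andb)).
- by rewrite big_andE.
- by move=> a b; rewrite xge_xmin.
- by [].
Qed.
Local Close Scope ring_scope.

Theorem mainTheorem11 (T : finType) (e : rel T) (k : nat) :
  simple_graph e ->
  3 <= #|T| ->
  (exists S : {set T}, is_threshold_on e S /\ #|S| = k) ->
  (forall S : {set T}, is_threshold_on e S -> #|S| <= k) ->
  exists d : nat, [/\ 1 <= d, d <= #|T| - k + 1 & has_trop_rep e d].
Proof.
Local Open Scope ring_scope.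
move=> [esym eirr] _ [S [[w [s Hw]] HSk]] _.
set m := #|~: S|.
exists m.+1; split => //.
  rewrite /m -HSk (cardsCs S) addn1.
  have : (#|~: S| <= #|T|)%nat by apply: max_card.
  move=> H; rewrite subKn //.
pose o := fun j : 'I_m => (enum_val j : T).
pose a := fun x => w x - s / 2 + 1 / 2.
pose f := fun (x : T) (i : 'I_m.+1) =>
  match unlift ord0 i with
  | None => if x \in S then Some (a x) else None
  | Some j => Some (if x == o j then -1 else (if e x (o j) then 2 else 1))
  end.
exists f, 1; split; first by lra.
move=> x y xy; rewrite xge_tdot; split.
- move=> exy; apply/forallP => i; rewrite /f.
  case: (unlift ord0 i) => [j|].
  + rewrite /=.
    case: eqP => [Hx|Hx]; case: eqP => [Hy|Hy].
    * by move: xy; rewrite Hx Hy eqxx.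
    * by rewrite -Hx esym exy; lra.
    * by rewrite -Hy exy; lra.
    * case: (e x (o j)); case: (e y (o j)); lra.
  + case: ifP => xS; case: ifP => yS //=.
    have := (proj2 (Hw x y xS yS xy) exy); rewrite /a; lra.
- move/forallP => H.
  case xS: (x \in S); case yS: (y \in S).
  + have := H ord0; rewrite /f unlift_none xS yS /= => h.
    apply/(Hw x y xS yS xy); move: h; rewrite /a; lra.
  + have yC : y \in ~: S by rewrite inE yS.
    have := H (lift ord0 (enum_rank_in yC y)).
    rewrite /f liftK /o enum_rankK_in // eqxx (negbTE xy) /=.
    by case: (e x y) => //; lra.
  + have xC : x \in ~: S by rewrite inE xS.
    have := H (lift ord0 (enum_rank_in xC x)).
    rewrite /f liftK /o enum_rankK_in // eqxx eq_sym (negbTE xy) /= esym.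
    by case: (e x y) => //; lra.
  + have xC : x \in ~: S by rewrite inE xS.
    have := H (lift ord0 (enum_rank_in xC x)).
    rewrite /f liftK /o enum_rankK_in // eqxx eq_sym (negbTE xy) /= esym.
    by case: (e x y) => //; lra.
Qed.
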